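(* Let $n\ge 8$ and let $\widetilde\Delta_n$ be the connected component of $\widetilde P_0(S_n)$ containing $[(1\,2)]$. Then every vertex $[\psi]$ of $\widetilde P_0(S_n)$ lies in $\widetilde\Delta_n$, except possibly those for which $o(\psi)$ is a prime $p$ with $p\ge n-1$.
   Context: $\widetilde P_0(S_n)$: vertex set $\{[x]:x\in S_n\setminus\{\mathrm{id}\}\}$ with $[x]=\{y:\langle y\rangle=\langle x\rangle\}$, distinct $[x],[y]$ adjacent iff some representatives are one a positive power of the other. *)

(* Defs.v *)
From HB Require Import structures.
From mathcomp Require Import all_boot all_order all_fingroup.
From Stdlib Require Import Relation_Operators.
Set Implicit Arguments. Unset Strict Implicit. Unset Printing Implicit Defensive.
Local Open Scope group_scope.

Definition qclass (gT : finGroupType) (x : gT) : {set gT} :=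
  [set y | <[y]> == <[x]>].

Definition qvertex (gT : finGroupType) (C : {set gT}) : Prop :=
  exists x : gT, x != 1 /\ C = qclass x.

Definition qadj (gT : finGroupType) (C D : {set gT}) : Prop :=
  [/\ qvertex C, qvertex D, C <> D &
   exists x y : gT, [/\ x \in C, y \in D &
     exists k : nat, (0 < k)%N /\ (x = y ^+ k \/ y = x ^+ k)]].

Definition qconnected (gT : finGroupType) (C D : {set gT}) : Prop :=
  clos_refl_trans _ (@qadj gT) C D.

(* Main.v *)
Require Import Defs.
From HB Require Import structures.
From mathcomp Require Import all_boot all_order all_fingroup.
From mathcomp Require Import all_solvable zify.
From Stdlib Require Import Relation_Operators.
Set Implicit Arguments. Unset Strict Implicit. Unset Printing Implicit Defensive.
Local Open Scope group_scope.


Definition conn (gT : finGroupType) (x y : gT) := qconnected (qclass x) (qclass y).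

Lemma qadj_sym (gT : finGroupType) (C D : {set gT}) : qadj C D -> qadj D C.
Proof.
case=> hC hD hne [x [y [hx hy [k [hk hxy]]]]]; split => //.
  by move=> e; apply: hne.
exists y, x; split => //; exists k; split => //; tauto.
Qed.

Lemma conn_refl (gT : finGroupType) (x : gT) : conn x x.
Proof. exact: rt_refl. Qed.

Lemma conn_sym (gT : finGroupType) (x y : gT) : conn x y -> conn y x.
Proof.
rewrite /conn /qconnected; elim => [C D h|C|C D E _ h1 _ h2].
- by apply: rt_step; apply: qadj_sym.
- exact: rt_refl.
- exact: rt_trans h2 h1.
Qed.

Lemma conn_trans (gT : finGroupType) (x y z : gT) : conn x y -> conn y z -> conn x z.
Proof. exact: rt_trans. Qed.

Lemma mem_qclass (gT : finGroupType) (x : gT) : x \in qclass x.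
Proof. by rewrite inE. Qed.

Lemma conn_pow (gT : finGroupType) (x : gT) k : x ^+ k != 1 -> conn x (x ^+ k).
Proof.
move=> hk.
have [e|ne] := eqVneq (qclass x) (qclass (x ^+ k)).
  by rewrite /conn e; apply: conn_refl.
apply: rt_step; split.
- exists x; split => //; apply: contra hk => /eqP ->; by rewrite expg1n.
- by exists (x ^+ k).
- by move=> e; rewrite e eqxx in ne.
exists x, (x ^+ k); split; try exact: mem_qclass.
exists k; split; last by right.
by move: hk; case: (k) => //; rewrite expg0 eqxx.
Qed.

Lemma conn_coprime (gT : finGroupType) (x z : gT) :
  commute x z -> coprime #[x] #[z] -> x != 1 -> z != 1 -> conn x z.
Proof.
move=> cxz co hx hz.
have e1 : (x * z) ^+ #[z] = x ^+ #[z] by rewrite expgMn // expg_order mulg1.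
have e2 : (x * z) ^+ #[x] = z ^+ #[x] by rewrite expgMn // expg_order mul1g.
have n1 : x ^+ #[z] != 1.
  apply: contra hx; rewrite -order_dvdn => hd.
  by rewrite -order_eq1 -dvdn1 -(eqnP co) dvdn_gcd dvdnn hd.
have n2 : z ^+ #[x] != 1.
  apply: contra hz; rewrite -order_dvdn => hd.
  by rewrite -order_eq1 -dvdn1 -(eqnP co) dvdn_gcd dvdnn hd.
have g1 : conn x (x * z).
  apply: (conn_trans (conn_pow n1)); rewrite -e1; apply: conn_sym; apply: conn_pow; by rewrite e1.
have g2 : conn z (x * z).
  apply: (conn_trans (conn_pow n2)); rewrite -e2; apply: conn_sym; apply: conn_pow; by rewrite e2.
exact: conn_trans g1 (conn_sym g2).
Qed.

Lemma commute_disj (T : finType) (x y : {perm T}) :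
  (forall i, (x i == i) || (y i == i)) -> commute x y.
Proof.
move=> h; apply/permP => i; rewrite !permM.
have [xi|xi] := eqVneq (x i) i.
  rewrite xi; have [yi|yi] := eqVneq (y i) i; first by rewrite yi xi.
  have hyy : y (y i) != y i by apply: contra yi => /eqP/perm_inj ->.
  by move: (h (y i)); rewrite (negbTE hyy) orbF => /eqP ->.
have yi : y i = i by move: (h i); rewrite (negbTE xi) => /eqP.
rewrite yi; have hxx : x (x i) != x i by apply: contra xi => /eqP/perm_inj ->.
by move: (h (x i)); rewrite (negbTE hxx) /= => /eqP ->.
Qed.

Lemma order_prime_pow (gT : finGroupType) (x : gT) p :
  prime p -> x ^+ p = 1 -> x != 1 -> #[x] = p.
Proof.
move=> pp e n1.
have d : #[x] %| p by rewrite order_dvdn e.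
case/primeP: pp => _ hp; case/orP: (hp _ d) => /eqP h //.
by move: n1; rewrite -order_eq1 h.
Qed.

Lemma tperm_ord (T : finType) (e f : T) : e != f -> #[tperm e f] = 2.
Proof.
move=> ne; apply: order_prime_pow => //; first by rewrite expgS expg1 tperm2.
apply/eqP => h; have := congr1 (fun s : {perm T} => s e) h.
by rewrite tpermL perm1 => /eqP; rewrite eq_sym (negbTE ne).
Qed.

Definition cyc3 (T : finType) (e f g : T) : {perm T} := tperm e f * tperm f g.

Lemma cyc3_fix (T : finType) (e f g y : T) :
  y != e -> y != f -> y != g -> cyc3 e f g y = y.
Proof.
by move=> h1 h2 h3; rewrite /cyc3 permM !tpermD // eq_sym.
Qed.

Lemma cyc3_ord (T : finType) (e f g : T) :
  e != f -> f != g -> e != g -> #[cyc3 e f g] = 3.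
Proof.
move=> ef fg eg.
have ce : cyc3 e f g e = g by rewrite /cyc3 permM tpermL tpermL.
have cf : cyc3 e f g f = e by rewrite /cyc3 permM tpermR tpermD // eq_sym.
have cg : cyc3 e f g g = f by rewrite /cyc3 permM (tpermD (x:=e)) ?tpermR // eq_sym.
have cx := @cyc3_fix T e f g.
have cn : cyc3 e f g != 1.
  apply/eqP => h; have := congr1 (fun s : {perm T} => s e) h.
  by rewrite ce perm1 => /eqP; rewrite eq_sym (negbTE eg).
move: (cyc3 e f g) ce cf cg cx cn => c ce cf cg cx cn.
apply: order_prime_pow => //.
  apply/permP => y; rewrite !expgSr expg0 mul1g !permM perm1.
  have [->|ye] := eqVneq y e; first by rewrite ce cg cf.
  have [->|yf] := eqVneq y f; first by rewrite cf ce cg.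
  have [->|yg] := eqVneq y g; first by rewrite cg cf ce.
  by rewrite !cx.
Qed.

Lemma pick1 (T : finType) (A : {set T}) : #|A| < #|T| -> exists e, e \notin A.
Proof.
move=> h; have : 0 < #|~: A| by move: (cardsC A); lia.
by case/card_gt0P => e; rewrite in_setC => he; exists e.
Qed.

Lemma pick2 (T : finType) (A : {set T}) : #|A| + 2 <= #|T| ->
  exists e f, [/\ e \notin A, f \notin A & e != f].
Proof.
move=> h; have : 1 < #|~: A| by move: (cardsC A); lia.
by case/card_gt1P => e [f [he hf ne]]; exists e, f; rewrite -!in_setC.
Qed.

Lemma pick3 (T : finType) (A : {set T}) : #|A| + 3 <= #|T| ->
  exists e f g, [/\ e \notin A, f \notin A, g \notin A & [/\ e != f, f != g & e != g]].
Proof.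
move=> h; have [g hg] : exists g, g \notin A by apply: pick1; lia.
have [|e [f [he hf ne]]] := @pick2 _ (g |: A).
  by rewrite cardsU1 hg; lia.
move: he hf; rewrite !in_setU1 !negb_or => /andP [eg he] /andP [fg hf].
by exists e, f, g; split => //; split.
Qed.

Definition orbx (T : finType) (x : {perm T}) (a : T) : {set T} :=
  [set (g : {perm T}) a | g in <[x]>].

Lemma orbxP (T : finType) (x : {perm T}) a y :
  reflect (exists2 g, g \in <[x]> & y = g a) (y \in orbx x a).
Proof. exact: imsetP. Qed.

Lemma orbx_mem (T : finType) (x : {perm T}) a g : g \in <[x]> -> g a \in orbx x a.
Proof. by move=> hg; apply/orbxP; exists g. Qed.

Lemma orbx_self (T : finType) (x : {perm T}) a : a \in orbx x a.
Proof. by have := @orbx_mem _ x a 1 (group1 _); rewrite perm1. Qed.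

Lemma orbx_card (T : finType) (x : {perm T}) a : #|orbx x a| <= #[x].
Proof. exact: leq_imset_card. Qed.

Lemma orbx_sym (T : finType) (x : {perm T}) a b : b \in orbx x a -> a \in orbx x b.
Proof.
case/orbxP => g hg ->; apply/orbxP; exists g^-1; first by rewrite groupV.
by rewrite permK.
Qed.

Lemma orbxX (T : finType) (x : {perm T}) a y : (x y \in orbx x a) = (y \in orbx x a).
Proof.
apply/idP/idP => /orbxP [g hg e].
  apply/orbxP; exists (g * x^-1); first by rewrite groupM ?groupV ?cycle_id.
  by rewrite permM -e permK.
apply/orbxP; exists (g * x); first by rewrite groupM ?cycle_id.
by rewrite permM e.
Qed.

Lemma fixX (T : finType) (g : {perm T}) a k : g a = a -> (g ^+ k) a = a.
Proof.
move=> h; elim: k => [|k ih]; first by rewrite expg0 perm1.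
by rewrite expgSr permM ih h.
Qed.

Lemma uniqU (T : finType) (x k : {perm T}) a :
  prime #[x] -> x a != a -> k \in <[x]> -> k a = a -> k = 1.
Proof.
move=> pp xa hk ka; apply/eqP; apply/negPn/negP => k1.
case/cycleP: hk => i ei.
have gen : generator <[x]> k.
  rewrite ei generator_coprime prime_coprime // order_dvdn.
  by rewrite -ei.
have : x \in <[k]> by rewrite -(eqP gen) cycle_id.
case/cycleP => m em; move: xa; by rewrite em fixX // eqxx.
Qed.

Lemma uniq2 (T : finType) (x g h : {perm T}) a :
  prime #[x] -> x a != a -> g \in <[x]> -> h \in <[x]> -> g a = h a -> g = h.
Proof.
move=> pp xa hg hh e; apply/eqP; rewrite eq_mulgV1; apply/eqP.
apply: (uniqU pp xa); first by rewrite groupM ?groupV.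
by rewrite permM e permK.
Qed.

Lemma orbx_card_eq (T : finType) (x : {perm T}) a :
  prime #[x] -> x a != a -> #|orbx x a| = #[x].
Proof.
move=> pp xa; rewrite /orbx card_in_imset //.
by move=> g h hg hh; apply: uniq2 pp xa hg hh.
Qed.

Lemma cycle_comm (T : finType) (x g : {perm T}) : g \in <[x]> -> commute x g.
Proof. by case/cycleP => i ->; apply: commuteX; exact: commute_refl. Qed.

Lemma swap_ex (T : finType) (x : {perm T}) a b :
  prime #[x] -> x a != a -> x b != b -> b \notin orbx x a ->
  exists s : {perm T}, [/\ forall g, g \in <[x]> -> s (g a) = g b,
                         forall g, g \in <[x]> -> s (g b) = g a &
                         forall y, y \notin orbx x a -> y \notin orbx x b -> s y = y].
Proof.
move=> pp xa xb ba.
pose f y := if [pick g in <[x]> | g a == y] is Some g then g b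
            else if [pick g in <[x]> | g b == y] is Some g then g a else y.
have F1 g : g \in <[x]> -> f (g a) = g b.
  move=> hg; rewrite /f; case: pickP => [h /andP [hh /eqP e]|no].
    by rewrite (uniq2 pp xa hh hg e).
  by move: (no g); rewrite hg eqxx.
have F2 g : g \in <[x]> -> f (g b) = g a.
  move=> hg; rewrite /f; case: pickP => [h /andP [hh /eqP e]|_].
    case/negP: ba; apply/orbxP; exists (h * g^-1); first by rewrite groupM ?groupV.
    by rewrite permM e permK.
  case: pickP => [h /andP [hh /eqP e]|no].
    by rewrite (uniq2 pp xb hh hg e).
  by move: (no g); rewrite hg eqxx.
have F3 y : y \notin orbx x a -> y \notin orbx x b -> f y = y.
  move=> ya yb; rewrite /f; case: pickP => [h /andP [hh /eqP e]|_].
    by case/negP: ya; rewrite -e orbx_mem.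
  case: pickP => [h /andP [hh /eqP e]|_] //.
  by case/negP: yb; rewrite -e orbx_mem.
have finv : involutive f.
  move=> y; case: (boolP (y \in orbx x a)) => [/orbxP [g hg ->]|ya].
    by rewrite F1 // F2.
  case: (boolP (y \in orbx x b)) => [/orbxP [g hg ->]|yb].
    by rewrite F2 // F1.
  by rewrite !F3.
exists (perm (inv_inj finv)); split => *; rewrite permE; [exact: F1|exact: F2|exact: F3].
Qed.

Definition is_swap (T : finType) (x : {perm T}) a b (s : {perm T}) :=
  [/\ forall g, g \in <[x]> -> s (g a) = g b,
      forall g, g \in <[x]> -> s (g b) = g a &
      forall y, y \notin orbx x a -> y \notin orbx x b -> s y = y].

Lemma swap_comm (T : finType) (x : {perm T}) a b s :
  is_swap x a b s -> commute x s.
Proof.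
case=> S1 S2 S3; apply/permP => y; rewrite !permM.
case: (boolP (y \in orbx x a)) => [/orbxP [g hg ->]|ya].
  have -> : x (g a) = (g * x) a by rewrite permM.
  by rewrite S1 ?groupM ?cycle_id // S1 // permM.
case: (boolP (y \in orbx x b)) => [/orbxP [g hg ->]|yb].
  have -> : x (g b) = (g * x) b by rewrite permM.
  by rewrite S2 ?groupM ?cycle_id // S2 // permM.
by rewrite !S3 // orbxX.
Qed.

Lemma swap_ord (T : finType) (x : {perm T}) a b s :
  b \notin orbx x a -> is_swap x a b s -> #[s] = 2.
Proof.
move=> ba [S1 S2 S3]; apply: order_prime_pow => //.
  apply/permP => y; rewrite expgS expg1 permM perm1.
  case: (boolP (y \in orbx x a)) => [/orbxP [g hg ->]|ya].
    by rewrite S1 // S2.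
  case: (boolP (y \in orbx x b)) => [/orbxP [g hg ->]|yb].
    by rewrite S2 // S1.
  by rewrite !S3.
apply/eqP => h; have := S1 1 (group1 _); rewrite h !perm1 => e.
by move: ba; rewrite -e orbx_self.
Qed.

Lemma rot_props (T : finType) (x : {perm T}) a b c s1 s2 :
  b \notin orbx x a -> c \notin orbx x a -> c \notin orbx x b ->
  is_swap x a b s1 -> is_swap x b c s2 ->
  [/\ commute x (s1 * s2), #[s1 * s2] = 3 &
      forall y, y \notin orbx x a -> y \notin orbx x b -> y \notin orbx x c ->
        (s1 * s2) y = y].
Proof.
move=> ba ca cb hs1 hs2.
have ab : a \notin orbx x b by apply: contra ba; exact: orbx_sym.
have ac : a \notin orbx x c by apply: contra ca; exact: orbx_sym.
have bc : b \notin orbx x c by apply: contra cb; exact: orbx_sym.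
have no u v g : v \notin orbx x u -> g \in <[x]> -> g v \notin orbx x u.
  move=> h hg; apply: contra h => /orbxP [k hk e]; apply/orbxP.
  exists (k * g^-1); first by rewrite groupM ?groupV.
  by rewrite permM -e permK.
have c1 := swap_comm hs1; have c2 := swap_comm hs2.
case: hs1 => S1 S2 S3; case: hs2 => R1 R2 R3.
have Fix : forall y, y \notin orbx x a -> y \notin orbx x b -> y \notin orbx x c ->
        (s1 * s2) y = y by move=> y h1 h2 h3; rewrite permM S3 // R3.
have Ra g : g \in <[x]> -> (s1 * s2) (g a) = g c.
  by move=> hg; rewrite permM S1 // R1.
have Rc g : g \in <[x]> -> (s1 * s2) (g c) = g b.
  by move=> hg; rewrite permM S3 ?no // R2.
have Rb g : g \in <[x]> -> (s1 * s2) (g b) = g a.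
  by move=> hg; rewrite permM S2 // R3 ?no.
split => //.
  exact: commuteM.
have cn : s1 * s2 != 1.
  apply/eqP => h; have := Ra 1 (group1 _); rewrite h !perm1 => e.
  by move: ca; rewrite -e orbx_self.
move: (s1 * s2) Fix Ra Rb Rc cn => r Fix Ra Rb Rc cn.
apply: order_prime_pow => //.
apply/permP => y; rewrite !expgSr expg0 mul1g !permM perm1.
case: (boolP (y \in orbx x a)) => [/orbxP [g hg ->]|ya].
  by rewrite Ra // Rc // Rb.
case: (boolP (y \in orbx x b)) => [/orbxP [g hg ->]|yb].
  by rewrite Rb // Ra // Rc.
case: (boolP (y \in orbx x c)) => [/orbxP [g hg ->]|yc].
  by rewrite Rc // Rb // Ra.
by rewrite !Fix.
Qed.

Lemma cardU_le (T : finType) (A B : {set T}) : #|A :|: B| <= #|A| + #|B|.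
Proof. by rewrite -cardsUI leq_addr. Qed.

Lemma fix_c3_comm (T : finType) (x : {perm T}) e f g :
  x e = e -> x f = f -> x g = g -> commute x (cyc3 e f g).
Proof.
move=> he hf hg; apply: commute_disj => i.
have [->|ie] := eqVneq i e; first by rewrite he eqxx.
have [->|iff] := eqVneq i f; first by rewrite hf eqxx.
have [->|ig] := eqVneq i g; first by rewrite hg eqxx.
by rewrite cyc3_fix // eqxx orbT.
Qed.

Lemma fix_tperm_comm (T : finType) (x : {perm T}) e f :
  x e = e -> x f = f -> commute x (tperm e f).
Proof.
move=> he hf; apply: commute_disj => i.
have [->|ie] := eqVneq i e; first by rewrite he eqxx.
have [->|iff] := eqVneq i f; first by rewrite hf eqxx.
by rewrite tpermD 1?eq_sym // eqxx orbT.
Qed.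

Lemma ne1_ord (T : finType) (x : {perm T}) k : #[x] = k.+2 -> x != 1.
Proof. by move=> h; rewrite -order_eq1 h. Qed.

Lemma set3_card (T : finType) (e f g : T) : #|[set y in [:: e; f; g]]| <= 3.
Proof. by rewrite cardsE card_size. Qed.

Lemma set4_card (T : finType) (e f g h : T) : #|[set y in [:: e; f; g; h]]| <= 4.
Proof. by rewrite cardsE card_size. Qed.

Lemma trans_conn (T : finType) (a0 b0 u v : T) :
  8 <= #|T| -> a0 != b0 -> u != v -> conn (tperm u v) (tperm a0 b0).
Proof.
move=> hT ab uv.
have [|e [f [g [he hf hg [ef fg eg]]]]] := @pick3 _ [set y in [:: u; v; a0; b0]].
  by have := set4_card u v a0 b0; lia.
move: he hf hg; rewrite !inE !negb_or.
case/and4P => eu ev ea eb; case/and4P => fu fv fa fb; case/and4P => gu gv ga gb.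
have o3 := cyc3_ord ef fg eg.
have c1 : conn (tperm u v) (cyc3 e f g).
  apply: conn_coprime.
  - by apply: fix_c3_comm; apply: tpermD; rewrite // eq_sym.
  - by rewrite tperm_ord // o3.
  - exact: (ne1_ord (k:=0) (tperm_ord _)).
  - exact: (ne1_ord (k:=1) o3).
have c2 : conn (tperm a0 b0) (cyc3 e f g).
  apply: conn_coprime.
  - by apply: fix_c3_comm; apply: tpermD; rewrite // eq_sym.
  - by rewrite tperm_ord // o3.
  - exact: (ne1_ord (k:=0) (tperm_ord _)).
  - exact: (ne1_ord (k:=1) o3).
exact: conn_trans c1 (conn_sym c2).
Qed.

Lemma oddfix_conn (T : finType) (a0 b0 e f : T) (y : {perm T}) :
  8 <= #|T| -> a0 != b0 -> y != 1 -> coprime #[y] 2 -> e != f ->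
  y e = e -> y f = f -> conn y (tperm a0 b0).
Proof.
move=> hT ab y1 co ef ye yf.
apply: (conn_trans _ (trans_conn hT ab ef)).
apply: conn_coprime; rewrite ?tperm_ord //; last exact: (ne1_ord (k:=0) (tperm_ord ef)).
exact: fix_tperm_comm.
Qed.

Lemma swap_get (T : finType) (x : {perm T}) a b :
  prime #[x] -> x a != a -> x b != b -> b \notin orbx x a ->
  exists s, is_swap x a b s.
Proof.
move=> pp xa xb ba; have [s [S1 S2 S3]] := swap_ex pp xa xb ba.
by exists s; split.
Qed.

Lemma inv_conn (T : finType) (a0 b0 : T) (x : {perm T}) :
  8 <= #|T| -> a0 != b0 -> #[x] = 2 -> conn x (tperm a0 b0).
Proof.
move=> hT ab o2.
have x1 : x != 1 by exact: (ne1_ord (k:=0) o2).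
have pp : prime #[x] by rewrite o2.
set F := [set i | x i == i].
case: (leqP 3 #|F|) => hF.
  have [|e [f [g [he hf hg [ef fg eg]]]]] := @pick3 _ (~: F).
    by move: (cardsC F); lia.
  move: he hf hg; rewrite !inE !negbK => /eqP he /eqP hf /eqP hg.
  have o3 := cyc3_ord ef fg eg.
  have c1 : conn x (cyc3 e f g).
    apply: conn_coprime; rewrite ?o2 ?o3 //; first exact: fix_c3_comm.
    exact: (ne1_ord (k:=1) o3).
  apply: (conn_trans c1).
  have [|h [k [hh hk hk']]] := @pick2 _ [set y in [:: e; f; g]].
    by have := set3_card e f g; lia.
  move: hh hk; rewrite !inE !negb_or; case/and3P => he' hf' hg'; case/and3P => ke kf kg.
  apply: (oddfix_conn (e:=h) (f:=k)) => //; first exact: (ne1_ord (k:=1) o3).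
  - by rewrite o3.
  - exact: cyc3_fix.
  - exact: cyc3_fix.
have [a ha] : exists a, a \notin F by apply: pick1; lia.
have [b hb] : exists b, b \notin F :|: orbx x a.
  apply: pick1; have := cardU_le F (orbx x a); have := orbx_card x a; lia.
have [c hc] : exists c, c \notin F :|: (orbx x a :|: orbx x b).
  apply: pick1; have := cardU_le F (orbx x a :|: orbx x b).
  have := cardU_le (orbx x a) (orbx x b); have := orbx_card x a; have := orbx_card x b; lia.
move: ha hb hc; rewrite !in_setU !negb_or !inE => xa /andP [xb ba] /and3P [xc ca cb].
have [s1 hs1] := swap_get pp xa xb ba.
have [s2 hs2] := swap_get pp xb xc cb.
have [cr o3 rfix] := rot_props ba ca cb hs1 hs2.
apply: (conn_trans (y := s1 * s2)).
  apply: conn_coprime; rewrite ?o2 ?o3 //; exact: (ne1_ord (k:=1) o3).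
have [|h [k [hh hk hk']]] := @pick2 _ (orbx x a :|: (orbx x b :|: orbx x c)).
  have := cardU_le (orbx x a) (orbx x b :|: orbx x c).
  have := cardU_le (orbx x b) (orbx x c); have := orbx_card x a; have := orbx_card x b.
  have := orbx_card x c; lia.
move: hh hk; rewrite !in_setU !negb_or => /and3P [h1 h2 h3] /and3P [k1 k2 k3].
apply: (oddfix_conn (e:=h) (f:=k)) => //; first exact: (ne1_ord (k:=1) o3).
- by rewrite o3.
- exact: rfix.
- exact: rfix.
Qed.

Lemma prime_conn (T : finType) (a0 b0 : T) (x : {perm T}) :
  8 <= #|T| -> a0 != b0 -> prime #[x] -> #[x] + 2 <= #|T| -> conn x (tperm a0 b0).
Proof.
move=> hT ab pp hp.
have [o2|o2] := eqVneq #[x] 2; first exact: inv_conn.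
have x1 : x != 1 by rewrite -order_eq1; apply: contraL pp => /eqP ->.
have co : coprime #[x] 2 by rewrite prime_coprime // dvdn_prime2.
set F := [set i | x i == i].
case: (leqP 2 #|F|) => hF.
  case/card_gt1P: hF => e [f [he hf ef]]; move: he hf; rewrite !inE => /eqP he /eqP hf.
  exact: (oddfix_conn (e:=e) (f:=f)).
have [a ha] : exists a, a \notin F by apply: pick1; lia.
have [b hb] : exists b, b \notin F :|: orbx x a.
  apply: pick1; have := cardU_le F (orbx x a); have := orbx_card x a; lia.
move: ha hb; rewrite !in_setU !negb_or !inE => xa /andP [xb ba].
have [s hs] := swap_get pp xa xb ba.
have o2s := swap_ord ba hs.
apply: (conn_trans (y := s)); last exact: inv_conn.
apply: conn_coprime; rewrite ?o2s //; first exact: swap_comm hs.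
exact: (ne1_ord (k:=0) o2s).
Qed.

Lemma big_cent (T : finType) (u v : {perm T}) :
  prime #[u] -> #|T| <= #[u] + 1 -> 3 <= #|T| -> commute u v -> v \in <[u]>.
Proof.
move=> pp hq h3 cuv.
have u1 : u != 1 by rewrite -order_eq1; apply: contraL pp => /eqP ->.
have [a ua] : exists a, u a != a.
  apply/existsP; apply: contraR u1 => /existsPn h; apply/eqP/permP => y.
  by rewrite perm1; apply/eqP; move: (h y); rewrite negbK.
have cO := orbx_card_eq pp ua.
case: (boolP (v a \in orbx u a)) => [/orbxP [g hg e]|va].
  have cg := cycle_comm hg.
  set k := v * g^-1.
  have ck : commute u k by apply: commuteM => //; apply: commuteV.
  have ka : k a = a by rewrite permM e permK.
  have kO y : y \in orbx u a -> k y = y.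
    case/orbxP => h hh ->; case/cycleP: hh => i ->.
    have : commute (u ^+ i) k by apply: commute_sym; apply: commuteX; apply: commute_sym.
    move=> c; by rewrite -permM c permM ka.
  suff k1 : k = 1.
    by move/eqP: k1; rewrite -eq_mulgV1 => /eqP ->.
  apply/permP => y; rewrite perm1.
  case: (boolP (y \in orbx u a)) => [/kO //|yO].
  apply/eqP; apply/negPn/negP => ky.
  case: (boolP (k y \in orbx u a)) => [/kO kk|kyO].
    by move/perm_inj: kk => /eqP; rewrite (negbTE ky).
  have : orbx u a \subset ~: [set y; k y].
    apply/subsetP => z hz; rewrite !inE negb_or; apply/andP; split.
      by apply: contra yO => /eqP <-.
    by apply: contra kyO => /eqP <-.
  move/subset_leq_card; rewrite (cardsCs (~: _)) setCK cards2 eq_sym ky cO; lia.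
have uva : u (v a) != v a.
  by rewrite -permM -cuv permM; apply: contra ua => /eqP /perm_inj ->.
have cO' := orbx_card_eq pp uva.
have dis : orbx u a :&: orbx u (v a) = set0.
  apply/setP => y; rewrite in_setI in_set0; apply/negP => /andP [/orbxP [g hg ->]].
  case/orbxP => h hh e; case/negP: va; apply/orbxP; exists (g * h^-1).
    by rewrite groupM ?groupV.
  by rewrite permM e permK.
have := cardsUI (orbx u a) (orbx u (v a)); rewrite dis cards0 cO cO' addn0.
have := max_card (orbx u a :|: orbx u (v a)); have := prime_gt1 pp; lia.
Qed.
Unset Implicit Arguments.

Theorem proposition7p8 (n : nat) (hn : (8 <= n)%N) (a b : 'I_n)
    (ha : nat_of_ord a = 0%N) (hb : nat_of_ord b = 1%N) (psi : 'S_n) :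
  psi != 1 ->
  ~ (prime #[psi] /\ (n - 1 <= #[psi])%N) ->
  qconnected (qclass (tperm a b)) (qclass psi).
Proof.
move=> p1 hnp.
have ab : a != b by apply/eqP => e; move: ha hb; rewrite e => ->.
have hT : (8 <= #|'I_n|)%N by rewrite card_ord.
apply: conn_sym.
set m := #[psi].
have m1 : (1 < m)%N.
  have := order_gt0 psi; rewrite -/m; move: p1; rewrite -order_eq1 -/m; lia.
set q := pdiv m.
have pq : prime q by exact: pdiv_prime.
have qm : (q %| m)%N by exact: pdiv_dvd.
have dm : (m %/ q %| m)%N by rewrite dvdn_div.
have d0 : (0 < m %/ q)%N by rewrite divn_gt0 ?prime_gt0 // dvdn_leq // ltnW.
have ou : #[psi ^+ (m %/ q)] = q.
  rewrite orderXdiv // -/m; rewrite -{1}(divnK qm) mulKn //.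
have u1 : psi ^+ (m %/ q) != 1 by rewrite -order_eq1 ou; apply: contraL pq => /eqP ->.
case: (leqP (q + 2) n) => hq.
  apply: (conn_trans (conn_pow u1)); apply: prime_conn => //; rewrite ?ou // card_ord //.
exfalso; apply: hnp.
have hc : psi \in <[psi ^+ (m %/ q)]>.
  apply: big_cent; rewrite ?ou ?card_ord //; try lia.
  by apply: commute_sym; apply: commuteX; apply: commute_refl.
have := order_dvdG hc; rewrite -/(order (psi ^+ (m %/ q))) ou -/m.
have mn1 : m != 1%N by rewrite neq_ltn m1 orbT.
move/(prime_nt_dvdP pq mn1) => e.
by rewrite -/m e; split => //; lia.
Qed.
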